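(* Assume that $\mathcal C$ is arithmetically Cohen–Macaulay. Then for all $(y_1,y_2),(z_1,z_2)\in \mathrm{AP}_{\mathcal S}$, \[(y_1,y_2)\le_{\mathcal S}(z_1,z_2)\iff y_1\le_1 z_1 \text{ and } y_2\le_2 z_2 .\]
   Context: Let $k$ be an infinite field, $d\ge 1$, and $0=a_0<a_1<\dots<a_n=d$ integers with $\gcd(a_1,\dots,a_n)=1$. Put $\mathbf a_i=(a_i,d-a_i)\in\mathbb N^2$ for $0\le i\le n$. Let $\mathcal S_1\subseteq\mathbb N$ be the numerical semigroup generated by $a_1,\dots,a_n$, $\mathcal S_2\subseteq\mathbb N$ the numerical semigroup generated by $d,d-a_1,\dots,d-a_{n-1}$, and $\mathcal S\subseteq\mathbb N^2$ the monoid generated by $\mathbf a_0,\dots,\mathbf a_n$. Partial orders: for $i=1,2$, $y\le_i z$ iff $z-y\in\mathcal S_i$; and $\mathbf y\le_{\mathcal S}\mathbf z$ iff $\mathbf z-\mathbf y\in\mathcal S$. Apery sets: $\mathrm{Ap}_i=\{y\in\mathcal S_i: y-d\notin\mathcal S_i\}$ for $i=1,2$, and $\mathrm{AP}_{\mathcal S}=\{\mathbf y\in\mathcal S: \mathbf y-\mathbf a_0\notin\mathcal S,\ \mathbf y-\mathbf a_n\notin\mathcal S\}$. Let $I_{\mathcal A}\subseteq k[x_0,\dots,x_n]$ be the kernel of the $k$-algebra map $x_i\mapsto u^{a_i}v^{d-a_i}$, and $k[\mathcal C]=k[x_0,\dots,x_n]/I_{\mathcal A}$ (the coordinate ring of the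 projective monomial curve $\mathcal C\subset\mathbb P^n_k$ parametrized by $x_i=u^{a_i}v^{d-a_i}$). $\mathcal C$ is called arithmetically Cohen–Macaulay if $k[\mathcal C]$ is Cohen–Macaulay. *)

(* Defs.v *)
From HB Require Import structures.
From mathcomp Require Import all_boot all_order all_algebra.
From mathcomp Require Import mpoly.
Set Implicit Arguments. Unset Strict Implicit. Unset Printing Implicit Defensive.
Import GRing.Theory.
Local Open Scope ring_scope.

(* Ideals are predicates R -> Prop. Everything about the quotient ring R/I is
   expressed through ideals of R containing I (correspondence theorem). *)
Section CommAlg.
Variable R : comNzRingType.

Definition is_ideal (J : R -> Prop) : Prop :=
  [/\ J 0, (forall x y, J x -> J y -> J (x + y)) & (forall r x, J x -> J (r * x))].

Definition is_prime (J : R -> Prop) : Prop :=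
  [/\ is_ideal J, ~ J 1 & (forall x y, J (x * y) -> J x \/ J y)].

Definition ideal_sum (I : R -> Prop) (fs : seq R) (p : R) : Prop :=
  exists g, I g /\ exists cs : seq R, size cs = size fs /\
     p = g + \sum_(i < size fs) cs`_i * fs`_i.

(* fs is a regular sequence on the R-module R/I *)
Definition regular_seq (I : R -> Prop) (fs : seq R) : Prop :=
  (forall i, (i < size fs)%N -> forall g,
      ideal_sum I (take i fs) (fs`_i * g) -> ideal_sum I (take i fs) g)
  /\ ~ ideal_sum I fs 1.

(* a chain P_0 < P_1 < ... < P_h = P of primes of R/I (primes of R containing I) *)
Definition prime_chain (I : R -> Prop) (P : R -> Prop) (h : nat)
    (Ps : nat -> R -> Prop) : Prop :=
  (forall j, (j <= h)%N -> is_prime (Ps j) /\ forall x, I x -> Ps j x)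
  /\ (forall j, (j < h)%N -> (forall x, Ps j x -> Ps j.+1 x) /\
                          exists x, Ps j.+1 x /\ ~ Ps j x)
  /\ (forall x, Ps h x <-> P x).

Definition height_eq (I P : R -> Prop) (h : nat) : Prop :=
  (exists Ps, prime_chain I P h Ps) /\
  (forall h' Ps, prime_chain I P h' Ps -> (h' <= h)%N).

Definition grade_eq (I P : R -> Prop) (h : nat) : Prop :=
  (exists fs, [/\ regular_seq I fs, (forall f, f \in fs -> P f) & size fs = h]) /\
  (forall fs, regular_seq I fs -> (forall f, f \in fs -> P f) -> (size fs <= h)%N).

Definition quotient_CM (I : R -> Prop) : Prop :=
  forall P : R -> Prop, is_prime P -> (forall x, I x -> P x) ->
    exists h, height_eq I P h /\ grade_eq I P h.
End CommAlg.

Definition curve_param (k : fieldType) (n d : nat) (a : nat -> nat) :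
    (n.+1).-tuple {mpoly k[2]} :=
  [tuple ('X_(0 : 'I_2) ^+ a i * 'X_(1 : 'I_2) ^+ (d - a i)) | i < n.+1].

Definition I_A (k : fieldType) (n d : nat) (a : nat -> nat)
    (p : {mpoly k[n.+1]}) : Prop :=
  comp_mpoly (@curve_param k n d a) p = 0.

Definition arith_CM (k : fieldType) (n d : nat) (a : nat -> nat) : Prop :=
  quotient_CM (@I_A k n d a).

Definition inS1 (n : nat) (a : nat -> nat) (y : nat) : Prop :=
  exists c : nat -> nat, y = (\sum_(1 <= i < n.+1) c i * a i)%N.
(* S_2 = <d, d - a_1, ..., d - a_{n-1}> = <d - a_0, ..., d - a_{n-1}> *)
Definition inS2 (n d : nat) (a : nat -> nat) (y : nat) : Prop :=
  exists c : nat -> nat, y = (\sum_(0 <= i < n) c i * (d - a i))%N.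
Definition inS (n d : nat) (a : nat -> nat) (y : nat * nat) : Prop :=
  exists c : nat -> nat, y.1 = (\sum_(0 <= i < n.+1) c i * a i)%N /\
                         y.2 = (\sum_(0 <= i < n.+1) c i * (d - a i))%N.

Definition le1 n a (y z : nat) : Prop := exists w, inS1 n a w /\ z = (y + w)%N.
Definition le2 n d a (y z : nat) : Prop := exists w, inS2 n d a w /\ z = (y + w)%N.
Definition leS n d a (y z : nat * nat) : Prop :=
  exists w, inS n d a w /\ z = ((y.1 + w.1)%N, (y.2 + w.2)%N).

(* AP_S = { y in S : y - a_0 notin S, y - a_n notin S } (differences in Z^2) *)
Definition inAPS n d a (y : nat * nat) : Prop :=
  [/\ inS n d a y,
      ~ (exists w, inS n d a w /\ y = ((w.1 + a 0%N)%N, (w.2 + (d - a 0%N))%N))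
    & ~ (exists w, inS n d a w /\ y = ((w.1 + a n)%N, (w.2 + (d - a n))%N))].

(* Main.v *)
Require Import Defs.
From HB Require Import structures.
From mathcomp Require Import all_boot all_order all_algebra.
From mathcomp Require Import mpoly.
From mathcomp Require Import zify ring.
From Stdlib Require Import Classical.
Set Implicit Arguments. Unset Strict Implicit. Unset Printing Implicit Defensive.
Import GRing.Theory.
Local Open Scope ring_scope.

Lemma depth_generic (R : comNzRingType) (I : R -> Prop) (HI : is_ideal I) (x f g b : R) :
 (forall h, I (x*h) -> I h) -> (forall h, I (f*h) -> I h) ->
 (forall h, (exists u c, I u /\ g*h = u + c*f) -> exists u c, I u /\ h = u + c*f) ->
 (exists u c, I u /\ f*b = u + c*x) -> (exists u c, I u /\ g*b = u + c*x) ->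
 exists u c, I u /\ b = u + c*x.
Proof.
case: HI => I0 ID IM.
have IN : forall y, I y -> I (-y) by move=> y hy; rewrite -mulN1r; apply: IM.
move=> hx hf hg [u1 [c1 [hu1 e1]]] [u2 [c2 [hu2 e2]]].
have hv : I (g * c1 - f * c2).
  apply: hx.
  have E1 : c1 * x = f*b - u1 by rewrite e1; ring.
  have E2 : c2 * x = g*b - u2 by rewrite e2; ring.
  have -> : x * (g*c1 - f*c2) = f * u2 - g * u1.
    transitivity (g * (c1 * x) - f * (c2 * x)); first ring.
    rewrite E1 E2; ring.
  by apply: ID; [apply: IM | apply: IN; apply: IM].
case: (hg c1) => [|u3 [c3 [hu3 e3]]].
  by exists (g*c1 - f*c2), c2; split => //; ring.
have hw : I (b - c3 * x).
  apply: hf.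
  have -> : f * (b - c3 * x) = u1 + x * u3.
    transitivity (f*b - c3 * f * x); first ring.
    rewrite e1 e3; ring.
  by apply: ID => //; apply: IM.
by exists (b - c3*x), c3; split => //; ring.
Qed.

Lemma ker_prime (R : comNzRingType) (D : idomainType) (h : R -> D) :
  (forall x y, h (x + y) = h x + h y) -> (forall x y, h (x * y) = h x * h y) -> h 1 = 1 ->
  is_prime (fun x => h x = 0).
Proof.
move=> hD hM h1.
have h0 : h 0 = 0 by apply/(addrI (h 0)); rewrite -hD !addr0.
split.
- split => // [x y hx hy|r x hx]; first by rewrite hD hx hy addr0.
  by rewrite hM hx mulr0.
- by rewrite h1 => /eqP; rewrite oner_eq0.
- move=> x y; rewrite hM => /eqP; rewrite mulf_eq0 => /orP [] /eqP; by [left|right].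
Qed.

Section Curve.
Variables (k : fieldType) (n d : nat) (a : nat -> nat).

Definition mon2 (p : nat * nat) : 'X_{1..2} :=
  [multinom (if (i : nat) == 0%N then p.1 else p.2) | i < 2].

Definition Ep (m : 'X_{1..n.+1}) : nat * nat :=
  ((\sum_(i < n.+1) m i * a i)%N, (\sum_(i < n.+1) m i * (d - a i))%N).

Lemma mon2_inj p q : mon2 p = mon2 q -> p = q.
Proof.
move=> /mnmP h; have h0 := h (0 : 'I_2); have h1 := h (1 : 'I_2).
rewrite !mnmE /= in h0 h1; clear h; move: h0 h1; case: p => [? ?]; case: q => [? ?] /= -> -> //.
Qed.

Lemma mon2D p q : mon2 ((p.1 + q.1)%N, (p.2 + q.2)%N) = (mon2 p + mon2 q)%MM.
Proof. by apply/mnmP => i; rewrite mnmDE !mnmE; case: ifP. Qed.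

Lemma phiX (m : 'X_{1..n.+1}) :
  comp_mpoly (curve_param k n d a) 'X_[m] = 'X_[mon2 (Ep m)].
Proof.
rewrite comp_mpolyX.
have E : forall i : 'I_n.+1, tnth (curve_param k n d a) i = 'X_[mon2 (a i, (d - a i)%N)].
  move=> i; rewrite /curve_param tnth_map tnth_ord_tuple.
  rewrite !mpolyXn -mpolyXD; congr 'X_[_]; apply/mnmP => j.
  rewrite mnmDE !mulmnE !mnmE. case: j => [[|[|j]] Hj] //=.
  by rewrite mul1n mul0n addn0.
  by rewrite mul1n mul0n.
rewrite (eq_bigr (fun i : 'I_n.+1 => 'X_[mon2 (a i, (d - a i)%N)] ^+ m i)); last by move=> i _; rewrite E.
rewrite mprodXnE; congr 'X_[_]; apply/mnmP => j.
rewrite mnm_sumE !mnmE /Ep /=; case: ifP => H; apply: eq_bigr => i _;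
  by rewrite mulmnE mnmE /= H mulnC.
Qed.

Lemma EpD m1 m2 : Ep (m1 + m2) = (((Ep m1).1 + (Ep m2).1)%N, ((Ep m1).2 + (Ep m2).2)%N).
Proof.
by rewrite /Ep /=; congr pair; rewrite -big_split; apply: eq_bigr => i _; rewrite mnmDE mulnDl.
Qed.

Lemma EpU (i : 'I_n.+1) : Ep U_(i) = (a i, (d - a i)%N).
Proof.
rewrite /Ep; congr pair; rewrite (bigD1 i) //= big1 ?addn0 ?mnm1E ?eqxx ?mul1n //;
  by move=> j ne; rewrite mnm1E eq_sym (negbTE ne).
Qed.

Lemma EpMn m c : Ep (m *+ c) = ((c * (Ep m).1)%N, (c * (Ep m).2)%N).
Proof.
rewrite /Ep /=; congr pair; rewrite big_distrr; apply: eq_bigr => i _;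
  by rewrite mulmnE /= [(m i * c)%N]mulnC -mulnA.
Qed.

Local Notation R := {mpoly k[n.+1]}.
Local Notation phi := (comp_mpoly (curve_param k n d a)).
Local Notation x0 := ('X_[U_(@ord0 n)] : R).

Definition Imem (p : R) := phi p = 0.
Definition Jm (p : R) := exists u c, Imem u /\ p = u + c * x0.
Definition S0m (m : 'X_{1..n.+1}) := exists m', Ep m = Ep (U_(@ord0 n) + m').

Lemma S0m_add m t : S0m m -> S0m (m + t).
Proof.
case=> m' E; exists (m' + t)%MM; rewrite addmA !(EpD _ t) E //.
Qed.

Lemma F2 m : S0m m -> Jm 'X_[m].
Proof.
case=> m' E; exists ('X_[m] - 'X_[m'] * x0), 'X_[m']; split; last by rewrite subrK.
by rewrite /Imem rmorphB rmorphM /= !phiX -mpolyXD -mon2D -EpD addmC E subrr.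
Qed.

Lemma F4 (q : R) t : (phi q)@_t != 0 -> exists m, t = mon2 (Ep m).
Proof.
move=> H; case: (classic (exists m, t = mon2 (Ep m))) => // Hn.
exfalso; move/negP: H; apply; apply/eqP.
rewrite comp_mpolyEX raddf_sum /= big1 // => m _.
rewrite phiX mcoeffZ mcoeffX.
case: eqP => [E|]; last by rewrite mulr0.
by case: Hn; exists m; rewrite E.
Qed.

Lemma F3 m : ~ S0m m -> ~ Jm 'X_[m].
Proof.
move=> nS [u [c [Iu E]]]; apply: nS.
have : phi 'X_[m] = phi c * 'X_[mon2 (Ep U_(@ord0 n))].
  by rewrite E rmorphD rmorphM /= Iu add0r phiX.
rewrite phiX => E2.
have : mon2 (Ep m) \in msupp (phi c * 'X_[mon2 (Ep U_(@ord0 n))]).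
  by rewrite -E2 mcoeff_msupp mcoeffX eqxx oner_neq0.
rewrite (perm_mem (msuppMX _ _)) => /mapP [t t_in Et].
move: t_in; rewrite mcoeff_msupp => /F4 [m'' Em''].
exists m''; apply: mon2_inj; rewrite Et Em'' EpD mon2D //.
Qed.


Lemma Imem_ideal : is_ideal Imem.
Proof.
split => [|x y hx hy|r x hx]; rewrite /Imem.
- exact: rmorph0.
- by rewrite rmorphD /= hx hy addr0.
- by rewrite rmorphM /= hx mulr0.
Qed.

Lemma Jm0 : Jm 0.
Proof. by exists 0, 0; rewrite /Imem rmorph0 mul0r addr0. Qed.

Lemma JmD p q : Jm p -> Jm q -> Jm (p + q).
Proof.
case=> [u [c [hu ->]]] [v [e [hv ->]]]; exists (u + v), (c + e); split.
  by rewrite /Imem rmorphD /= hu hv addr0.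
by rewrite mulrDl !addrA [u + _ + v]addrAC.
Qed.

Lemma JmM r p : Jm p -> Jm (r * p).
Proof.
case=> [u [c [hu ->]]]; exists (r * u), (r * c); split.
  by rewrite /Imem rmorphM /= hu mulr0.
by rewrite mulrDr mulrA.
Qed.

Lemma JmZ (c : k) p : Jm p -> Jm (c *: p).
Proof. by move=> h; rewrite -mul_mpolyC; apply: JmM. Qed.

Lemma S0mU0 x : S0m (U_(@ord0 n) + x).
Proof. by exists x. Qed.

Lemma mnm_neq0 (m : 'X_{1..n.+1}) : m != 0%MM -> exists i, (0 < m i)%N.
Proof.
move=> H; case: (classic (exists i, (0 < m i)%N)) => // Hn.
exfalso; move/eqP: H; apply; apply/mnmP => i; rewrite mnm0E.
case: (posnP (m i)) => // hp; case: Hn; exists i; exact: hp.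
Qed.

Lemma socle (m : 'X_{1..n.+1}) (f : R) :
  (forall i, S0m (m + U_(i))) -> f@_0 = 0 -> Jm (f * 'X_[m]).
Proof.
move=> Hi f0; rewrite (mpolyE f) big_distrl /=.
apply: (big_ind Jm Jm0 JmD) => m' _.
case: (eqVneq m' 0%MM) => [->|nz]; first by rewrite f0 scale0r mul0r; exact: Jm0.
rewrite -scalerAl; apply: JmZ.
case: (mnm_neq0 nz) => i hi.
have -> : (m' = (U_(i) + (m' - U_(i))))%MM.
  apply/mnmP => j; rewrite !mnmDE mnmBE mnm1E; case: (i =P j) => [<-|_] /=; lia.
rewrite -!mpolyXD; apply: F2.
have -> : (U_(i) + (m' - U_(i)) + m = (m + U_(i)) + (m' - U_(i)))%MM.
  by rewrite addmC addmA.
exact: S0m_add.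
Qed.


Lemma socle_exists K : forall m, ~ S0m m -> (forall t, (K <= mdeg t)%N -> S0m (m + t)) ->
  exists m', ~ S0m m' /\ forall i, S0m (m' + U_(i)).
Proof.
elim: K => [|K IH] m nS H.
  by exfalso; apply: nS; rewrite -[m]addm0; apply: H.
case: (classic (forall i, S0m (m + U_(i)))) => [Hall|]; first by exists m.
move=> /not_all_ex_not [i ni]; apply: (IH (m + U_(i))%MM ni) => t ht.
rewrite -addmA; apply: H; rewrite mdegD mdeg1; lia.
Qed.

Hypotheses (d_pos : (0 < d)%N) (a0 : a 0%N = 0%N) (an : a n = d)
  (a_mid : forall i, (0 < i < n)%N -> (a i < d)%N).

Lemma bound m0 : S0m (m0 + U_(@ord_max n)) ->
  forall t, (n.+1 * d <= mdeg t)%N -> S0m (m0 + t).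
Proof.
move=> H0 t ht.
have [i hi] : exists i : 'I_n.+1, (d <= t i)%N.
  case: (classic (exists i : 'I_n.+1, (d <= t i)%N)) => // Hn; exfalso.
  have : (\sum_(i < n.+1) t i <= \sum_(i < n.+1) d.-1)%N.
    apply: leq_sum => i _; case: (leqP d (t i)) => h; first by case: Hn; exists i.
    lia.
  rewrite sum_nat_const card_ord -mdegE => h2.
  have := leq_trans ht h2; rewrite leq_pmul2l //; lia.
set t' := (t - U_(i) *+ d)%MM.
have Et : t = (U_(i) *+ d + t')%MM.
  apply/mnmP => j; rewrite /t' !mnmDE mnmBE !mulmnE mnm1E.
  by case: (i =P j) => [<-|_] /=; lia.
case: (eqVneq (i : nat) 0%N) => [i0|inz].
  have Ei : i = ord0 by apply: val_inj.
  rewrite Ei in Et.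
  exists (m0 + U_(@ord0 n) *+ d.-1 + t')%MM; congr Ep.
  apply/mnmP => j; rewrite Et !mnmDE !mulmnE !mnm1E. lia.
case: (eqVneq (i : nat) n) => [iN|inN].
  have Ei : i = ord_max by apply: val_inj.
  rewrite Ei in Et.
  have -> : (m0 + t = (m0 + U_(@ord_max n)) + (U_(@ord_max n) *+ d.-1 + t'))%MM.
    apply/mnmP => j; rewrite Et !mnmDE !mulmnE !mnm1E. lia.
  exact: S0m_add.
have hai : (a i < d)%N.
  apply: a_mid; have := ltn_ord i; move: inz inN; lia.
have -> : (m0 + t = (U_(i) *+ d) + (m0 + t'))%MM.
  apply/mnmP => j; rewrite Et !mnmDE. lia.
apply: S0m_add; exists (U_(@ord_max n) *+ a i + U_(@ord0 n) *+ (d - a i).-1)%MM.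
rewrite !EpD !EpMn !EpU /= an a0 subnn; congr pair; nia.
Qed.


Lemma mpolyX_neq0 (m : 'X_{1..2}) : ('X_[m] : {mpoly k[2]}) != 0.
Proof.
apply/eqP => h.
have : ('X_[m] : {mpoly k[2]})@_m = 1 by rewrite mcoeffX eqxx.
by rewrite h mcoeff0 => /eqP; rewrite eq_sym oner_eq0.
Qed.

Lemma A_m (f g : R) : f@_0 = 0 -> g@_0 = 0 -> (forall h, Imem (f*h) -> Imem h) ->
  (forall h, (exists u c, Imem u /\ g*h = u + c*f) -> exists u c, Imem u /\ h = u + c*f) ->
  forall m0, S0m (m0 + U_(@ord_max n)) -> S0m m0.
Proof.
move=> f0 g0 hf hg m0 H; case: (classic (S0m m0)) => // nS; exfalso.
have [m' [nS' Hi]] := socle_exists nS (bound H).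
apply: (F3 nS'); apply: (depth_generic Imem_ideal (f:=f) (g:=g)) => //.
- move=> h; rewrite /Imem rmorphM /= phiX => /eqP; rewrite mulf_eq0 => /orP [|/eqP//].
  by rewrite (negbTE (mpolyX_neq0 _)).
- exact: socle.
- exact: socle.
Qed.


Definition sig2 : 2.-tuple {mpoly k[2]} := [tuple 'X_(0 : 'I_2); 0].
Definition Pm (p : R) := (phi p).@[fun _ => 0] = 0.
Definition P1 (p : R) := comp_mpoly sig2 (phi p) = 0.

Lemma Imem_prime : is_prime Imem.
Proof. by apply: ker_prime => [x y|x y|]; rewrite ?rmorphD ?rmorphM ?rmorph1. Qed.

Lemma P1_prime : is_prime P1.
Proof. by apply: ker_prime => [x y|x y|]; rewrite ?rmorphD ?rmorphM ?rmorph1 //= ?rmorphD ?rmorphM ?rmorph1. Qed.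

Lemma Pm_prime : is_prime Pm.
Proof. by apply: ker_prime => [x y|x y|]; rewrite ?rmorphD ?rmorphM ?rmorph1 //= ?mevalD ?mevalM ?meval1. Qed.

Lemma I_P1 x : Imem x -> P1 x.
Proof. by rewrite /Imem /P1 => ->; rewrite rmorph0. Qed.

Lemma P1_Pm x : P1 x -> Pm x.
Proof.
rewrite /P1 /Pm => h.
transitivity ((comp_mpoly sig2 (phi x)).@[fun _ => 0]); last by rewrite h meval0.
rewrite [RHS]comp_mpoly_meval; apply: meval_eq => i; case: i => [[|[|i]] Hi] //=.
- by rewrite /tnth /= mevalXU.
- by rewrite /tnth /= meval0.
Qed.

Lemma tnth_cp (i : 'I_n.+1) : tnth (curve_param k n d a) i = 'X_[mon2 (a i, (d - a i)%N)].
Proof. by rewrite -EpU -phiX comp_mpolyXU (tnth_nth 0). Qed.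

Lemma meval_zero (f : R) : f.@[fun _ => 0] = f@_0.
Proof.
rewrite mevalE [in RHS](mpolyE f) raddf_sum /=; apply: eq_bigr => m _.
rewrite mcoeffZ mcoeffX; congr (_ * _).
case: (eqVneq m 0%MM) => [->|nz].
  by rewrite big1 // => i _; rewrite mnm0E expr0.
case: (mnm_neq0 nz) => i hi.
by rewrite (bigD1 i) //= expr0n (negbTE (lt0n_neq0 hi)) mul0r.
Qed.


Local Notation xn := ('X_[U_(@ord_max n)] : R).

Lemma phi_x0 : phi x0 = 'X_[mon2 (0%N, d)].
Proof. by rewrite phiX EpU /= a0 subn0. Qed.

Lemma phi_xn : phi xn = 'X_[mon2 (d, 0%N)].
Proof. by rewrite phiX EpU /= an subnn. Qed.

Lemma sig2X p : comp_mpoly sig2 'X_[mon2 p] = 'X_(0 : 'I_2) ^+ p.1 * 0 ^+ p.2.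
Proof. by rewrite comp_mpolyX !big_ord_recl big_ord0 mulr1 /tnth /= !mnmE /=. Qed.

Lemma d_neq0 : (d == 0%N) = false.
Proof. by case: d d_pos. Qed.

Lemma x0_P1 : P1 x0.
Proof. by rewrite /P1 phi_x0 sig2X /= expr0n d_neq0 mulr0. Qed.

Lemma x0_nI : ~ Imem x0.
Proof. by rewrite /Imem phi_x0 => /eqP; rewrite (negbTE (mpolyX_neq0 _)). Qed.

Lemma xn_Pm : Pm xn.
Proof.
by rewrite /Pm phi_xn mevalX !big_ord_recl big_ord0 /= !mnmE /= expr0n d_neq0 mul0r.
Qed.

Lemma xn_nP1 : ~ P1 xn.
Proof.
rewrite /P1 phi_xn sig2X /= expr0 mulr1 mpolyXn => /eqP.
by rewrite (negbTE (mpolyX_neq0 _)).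
Qed.

Lemma Pm_coef0 f : Pm f -> f@_0 = 0.
Proof.
rewrite /Pm comp_mpoly_meval => H; rewrite -meval_zero.
transitivity (f.@[fun i => (tnth (curve_param k n d a) i).@[fun _ => 0]]); last by [].
apply: meval_eq => i; rewrite tnth_cp mevalX !big_ord_recl big_ord0 /= !mnmE /=.
case: (posnP (a i)) => [->|h].
  by rewrite subn0 !expr0n d_neq0 /= mul0r mulr0.
by rewrite expr0n (negbTE (lt0n_neq0 h)) /= mul0r.
Qed.

Definition Ps (j : nat) : R -> Prop :=
  match j with 0 => Imem | 1 => P1 | _ => Pm end.

Lemma chain2 : prime_chain Imem Pm 2 Ps.
Proof.
split; [|split].
- move=> j hj; case: j hj => [|[|j]] hj /=; split.
  + exact: Imem_prime.
  + by [].
  + exact: P1_prime.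
  + exact: I_P1.
  + exact: Pm_prime.
  + by move=> x hx; apply: P1_Pm; apply: I_P1.
- move=> j hj; case: j hj => [|[|j]] hj //= ; split.
  + exact: I_P1.
  + by exists x0; split; [exact: x0_P1 | exact: x0_nI].
  + exact: P1_Pm.
  + by exists xn; split; [exact: xn_Pm | exact: xn_nP1].
- by [].
Qed.

Lemma get_fg : arith_CM k n d a -> exists f g : R,
  [/\ f@_0 = 0, g@_0 = 0, (forall h, Imem (f*h) -> Imem h) &
      (forall h, (exists u c, Imem u /\ g*h = u + c*f) -> exists u c, Imem u /\ h = u + c*f)].
Proof.
move=> hCM.
have [h [[_ hmax] [[fs [[reg _] inP sz]] _]]] :=
  hCM Pm Pm_prime (fun x hx => P1_Pm (I_P1 hx)).
have h2 : (2 <= h)%N := hmax 2%N Ps chain2.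
case: fs reg inP sz => [|f [|g fs]] reg inP sz; try (rewrite /= in sz; lia).
exists f, g; split.
- by apply: Pm_coef0; apply: inP; rewrite inE eqxx.
- by apply: Pm_coef0; apply: inP; rewrite !inE eqxx orbT.
- move=> x hx.
  have := reg 0%N isT x; rewrite /= => H.
  have [|u [hu [cs [_ E]]]] := H.
    by exists (f * x); split => //; exists [::]; split => //; rewrite big_ord0 addr0.
  by move: E; rewrite big_ord0 addr0 => ->.
- move=> x [u [c [hu E]]].
  have := reg 1%N isT x; rewrite /= => H.
  have [|v [hv [cs [hcs E2]]]] := H.
    by exists u; split => //; exists [:: c]; split => //; rewrite big_ord1 /= E.
  by exists v, cs`_0; split => //; rewrite E2 big_ord1.
Qed.


Lemma inS_Ep m : inS n d a (Ep m).
Proof.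
exists (fun i => m (inord i)); rewrite /Ep !big_mkord; split;
  by apply: eq_bigr => i _; rewrite inord_val.
Qed.

Lemma inS_ex y : inS n d a y -> exists m, y = Ep m.
Proof.
case=> c [e1 e2]; exists [multinom c i | i < n.+1].
move: e1 e2; case: y => y1 y2 /= -> ->; rewrite /Ep !big_mkord; congr pair;
  by apply: eq_bigr => i _; rewrite mnmE.
Qed.

Definition Sk (y : nat * nat) (i : nat) :=
  exists w, inS n d a w /\ y = (w.1, (w.2 + i * d)%N).

Lemma A_pair (hCM : arith_CM k n d a) y :
  inS n d a y -> Sk ((y.1 + d)%N, y.2) 1 -> Sk y 1.
Proof.
have [f [g [f0 g0 hf hg]]] := get_fg hCM.
move=> /inS_ex [m0 ->] [w [/inS_ex [m' ->] E]].
have : S0m (m0 + U_(@ord_max n)).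
  case: E => E1 E2.
  exists m'; rewrite !EpD !EpU /= an subnn a0 subn0; congr pair; lia.
move=> /(A_m f0 g0 hf hg) [m'' E2].
exists (Ep m''); split; first exact: inS_Ep.
by rewrite E2 EpD EpU /= a0 subn0 mul1n; congr pair; lia.
Qed.

Lemma inS_add y w : inS n d a y -> inS n d a w -> inS n d a ((y.1 + w.1)%N, (y.2 + w.2)%N).
Proof. by move=> /inS_ex [m1 ->] /inS_ex [m2 ->]; rewrite -EpD; apply: inS_Ep. Qed.

Lemma inS_a0 K : inS n d a (0%N, (K * d)%N).
Proof.
have := inS_Ep (U_(@ord0 n) *+ K); rewrite EpMn EpU /= a0 subn0 muln0 mulnC //.
Qed.

Lemma inS_an K : inS n d a ((K * d)%N, 0%N).
Proof.
have := inS_Ep (U_(@ord_max n) *+ K); rewrite EpMn EpU /= an subnn muln0 mulnC //.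
Qed.

Lemma A1 (hCM : arith_CM k n d a) j : forall r, inS n d a r ->
  Sk ((r.1 + j * d)%N, r.2) 1 -> Sk r 1.
Proof.
elim: j => [|j IH] r hr H.
  by move: H; rewrite mul0n addn0; case: r hr.
apply: (IH r hr); apply: (A_pair hCM).
  by have := inS_add hr (inS_an j); rewrite addn0.
rewrite /=; have -> : (r.1 + j * d + d = r.1 + j.+1 * d)%N by rewrite mulSn; lia.
exact: H.
Qed.

Lemma A2 (hCM : arith_CM k n d a) i : forall r j, inS n d a r ->
  Sk ((r.1 + j * d)%N, r.2) i -> Sk r i.
Proof.
elim: i => [|i IH] r j hr H.
  by exists r; split => //; rewrite mul0n addn0; case: r hr H.
have H' : Sk ((r.1 + j * d)%N, r.2) i.
  case: H => w [hw E]; exists ((w.1 + 0)%N, (w.2 + d)%N); split.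
    by have := inS_add hw (inS_a0 1); rewrite mul1n.
  by rewrite E /= addn0 mulSn; congr pair; lia.
case: (IH r j hr H') => v [hv Ev].
case: H => w [hw Ew].
have : Sk ((v.1 + j * d)%N, v.2) 1.
  exists w; split => //; move: Ew; rewrite Ev /= mulSn => -[-> E2]; congr pair; lia.
case/(A1 hCM hv) => u [hu Eu]; exists u; split => //.
by rewrite Ev Eu /= mulSn; congr pair; lia.
Qed.

End Curve.

Unset Implicit Arguments.
Local Close Scope ring_scope.

Lemma congr_d {d u v vv A B : nat} : (u + v = d * A)%N -> (u + vv = d * B)%N -> (v <= vv)%N ->
  exists K, vv = (v + K * d)%N.
Proof.
move=> E1 E2 h; exists (B - A)%N; rewrite mulnC mulnBr -E1 -E2; lia.
Qed.

Theorem mainTheorem1 (k : fieldType) (n d : nat) (a : nat -> nat)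
  (k_inf : forall s : seq k, exists x : k, x \notin s)
  (d_pos : (1 <= d)%N)
  (a0 : a 0%N = 0%N) (an : a n = d)
  (a_incr : forall i, (i < n)%N -> (a i < a i.+1)%N)
  (a_gcd : \big[gcdn/0%N]_(1 <= i < n.+1) a i = 1%N)
  (hCM : arith_CM k n d a) :
  forall y z : nat * nat, inAPS n d a y -> inAPS n d a z ->
    (leS n d a y z <-> le1 n a y.1 z.1 /\ le2 n d a y.2 z.2).
Proof.
have a_mono : forall j, (j <= n)%N -> forall i, (i <= j)%N -> (a i <= a j)%N.
  elim=> [|j IH] hj i hij; first by move: hij; rewrite leqn0 => /eqP ->.
  move: hij; rewrite leq_eqVlt => /orP [/eqP -> //|hij].
  have := IH (ltnW hj) i hij; have := a_incr j hj; lia.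
have a_le : forall i, (i <= n)%N -> (a i <= d)%N.
  by move=> i hi; rewrite -an; apply: a_mono.
have a_mid : forall i, (0 < i < n)%N -> (a i < d)%N.
  move=> i /andP [_ hi]; have := a_incr i hi; have := a_le i.+1 hi; lia.
have deg : forall y, inS n d a y -> exists C, (y.1 + y.2 = d * C)%N.
  move=> y [c [e1 e2]]; exists (\sum_(0 <= i < n.+1) c i)%N.
  rewrite e1 e2 -big_split big_distrr /=; apply: eq_big_nat => i /andP [_ hi].
  by rewrite -mulnDr subnKC ?a_le // mulnC.
move=> y z [hy _ _] [hz _ _]; split.
- case=> w [[c [e1 e2]] ->] /=; split.
  + by exists w.1; split => //; exists c; rewrite e1 big_ltn // a0 muln0 add0n.
  + by exists w.2; split => //; exists c; rewrite e2 big_nat_recr //= an subnn muln0 addn0.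
case=> [[w1 [[c e1] Ez1]] [w2 [[c' e2] Ez2]]].
pose p2 := (\sum_(0 <= i < n.+1) c i * (d - a i))%N.
pose q1 := (\sum_(0 <= i < n.+1) c' i * a i)%N.
have hP : inS n d a (w1, p2).
  by exists c; split => //=; rewrite e1 [in RHS]big_ltn // a0 muln0 add0n.
have hQ : inS n d a (q1, w2).
  by exists c'; split => //=; rewrite e2 [in RHS]big_nat_recr //= an subnn muln0 addn0.
have [Cy Ey] := deg _ hy; have [Cz Ez] := deg _ hz.
have [CP EP] := deg _ hP; have [CQ EQ] := deg _ hQ.
have ED : (w1 + w2 = d * (Cz - Cy))%N by rewrite mulnBr -Ey -Ez Ez1 Ez2; lia.
rewrite /= in EP EQ.
have ED' : (w2 + w1 = d * (Cz - Cy))%N by rewrite addnC.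
have EQ' : (w2 + q1 = d * CQ)%N by rewrite addnC.
suff hw : inS n d a (w1, w2).
  by exists (w1, w2); split => //=; rewrite -Ez1 -Ez2; case: (z).
case: (leqP p2 w2) => h1.
  have [K EK] := congr_d EP ED h1.
  by have := inS_add hP (inS_a0 n d a0 K); rewrite /= addn0 -EK.
case: (leqP q1 w1) => h2.
  have [K EK] := congr_d EQ' ED' h2.
  by have := inS_add hQ (inS_an an K); rewrite /= addn0 -EK.
have [kk Ekk] := congr_d ED EP (ltnW h1).
have [kk' Ekk'] := congr_d ED' EQ' (ltnW h2).
have := @A2 k n d a d_pos a0 an a_mid hCM kk (w1, p2) kk' hP.
case=> [|v [hv Ev]].
  by exists (q1, w2); split => //=; rewrite Ekk' Ekk.
move: Ev; case: v hv => v1 v2 hv [-> E2].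
have -> : w2 = v2 by move: E2; rewrite Ekk; lia.
exact: hv.
Qed.
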